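(* Consider the repeated service game described in the context, with $t>0$, $c>0$, and a strictly decreasing continuous utility $\Gamma:[0,1]\to(0,\infty)$. Let $d^{\max}\in(0,1)$ and $w^{\min}\in(0,1)$ with $w^{\min}\Gamma(0)>c$. Let $d^\star$ be the unique $x\in(0,1)$ with $(1-x)\Gamma(x)=c/w^{\min}$. Define $$p^\star=\frac{c\left(\frac{c}{w^{\min}}-\Gamma(d^{\max})(1-d^{\max})\right)}{\left(\Gamma(d^\star)-\Gamma(d^{\max})\right)(1-d^\star)(1-d^{\max})-c\,(d^\star-d^{\max})},$$ $$\tau^\star=\frac{\Gamma(d^{\max})-p^\star}{\Gamma(d^{\max})-c/(1-d^{\max})}\,t,$$ assuming the denominators are nonzero and $0<\tau^\star<t$. Let $$w^\star=\frac{c}{(1-d^{\max})\Gamma(d^{\max})}.$$ Then: (i) with $(\tau,p)=(\tau^\star,p^\star)$, the cooperation conditions hold for every $d\in(0,d^{\max}]$ and every $w\in[w^\star,1)$; (ii) with $(\tau,p)=(\tau^\star,p^\star)$, the cooperation conditions hold for every $w\in[w^{\min},1)$ and every $d\in(0,d^\star]$; (iii) these thresholds are optimal. For every $\tau\in(0,t)$, every $p>0$ and every $w\in(0,1)$ with $w<w^\star$, the cooperation conditions fail at $d=d^{\max}$. Likewise, for every $\tau\in(0,t)$, every $p>0$ and every $d\in(d^\star,1)$, the cooperation conditions fail at $w=w^{\min}$.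
   Context: A service provider (SP) and a client interact in rounds of duration $t>0$. The parameters are: trial time $\tau\in(0,t)$, SP cost per unit time $c>0$, price per unit time $p>0$, channel outage probability $d\in(0,1)$, continuation probability (cooperation willingness) $w\in(0,1)$, and a client utility function $\Gamma$. When both players use COOP, the long-term payoffs are $$\Pi_s^{\mathrm C}=\frac{(1-d)(p-c)t-dc\tau}{1-(1-d)w},\qquad \Pi_c^{\mathrm C}=\frac{(1-d)(\Gamma(d)-p)t+d\Gamma(d)\tau}{1-(1-d)w}.$$ For an integer $j\ge 2$, the long-term payoff of a player using the defect-and-recover-after-$j$-rounds strategy JDEF$_j$ against COOP is: - for the SP, $$\Pi_s^{(j)}=\frac{(1-d)\big(pt-c\tau-w^{j-1}c(t-\tau)\big)-dc\tau}{1-(1-d)w^{j}};$$ - for the client, $$\Pi_c^{(j)}=\frac{(1-d)\big(\Gamma(d)\tau+w^{j-1}(\Gamma(d)(t-\tau)-pt)\big)+d\Gamma(d)\tau}{1-(1-d)w^{j}}.$$ The cooperation conditions (at given $d,w,\tau,p$) hold when both of the following hold: - $\Pi_s^{\mathrm C}\ge\Pi_s^{(j)}$ for all integers $j\ge2$; - $\Pi_c^{\mathrm C}\ge \Pi_c^{(j)}$ for all integers $j\ge 2$. *)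

(* Defs.v *)
From Stdlib Require Import Reals Lra.
Open Scope R_scope.

Definition continuous_on_01 (G : R -> R) : Prop :=
  forall x, 0 <= x <= 1 -> forall eps, 0 < eps ->
    exists delta, 0 < delta /\
      forall y, 0 <= y <= 1 -> Rabs (y - x) < delta -> Rabs (G y - G x) < eps.

Definition strict_decr_01 (G : R -> R) : Prop :=
  forall x y, 0 <= x <= 1 -> 0 <= y <= 1 -> x < y -> G y < G x.

(* Long-term payoffs: both COOP. *)
Definition Pi_s_C (t c : R) (d w tau p : R) : R :=
  ((1 - d) * (p - c) * t - d * c * tau) / (1 - (1 - d) * w).

Definition Pi_c_C (t : R) (G : R -> R) (d w tau p : R) : R :=
  ((1 - d) * (G d - p) * t + d * G d * tau) / (1 - (1 - d) * w).

(* Long-term payoffs of JDEF_j against COOP. *)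
Definition Pi_s_J (t c : R) (d w tau p : R) (j : nat) : R :=
  ((1 - d) * (p * t - c * tau - w ^ (j - 1) * c * (t - tau)) - d * c * tau)
  / (1 - (1 - d) * w ^ j).

Definition Pi_c_J (t : R) (G : R -> R) (d w tau p : R) (j : nat) : R :=
  ((1 - d) * (G d * tau + w ^ (j - 1) * (G d * (t - tau) - p * t)) + d * G d * tau)
  / (1 - (1 - d) * w ^ j).

Definition coop_conditions (t c : R) (G : R -> R) (d w tau p : R) : Prop :=
  (forall j : nat, (2 <= j)%nat -> Pi_s_C t c d w tau p >= Pi_s_J t c d w tau p j) /\
  (forall j : nat, (2 <= j)%nat -> Pi_c_C t G d w tau p >= Pi_c_J t G d w tau p j).

(* Main.v *)
Require Import Defs.
From Stdlib Require Import Reals Lra Lia Psatz.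
Open Scope R_scope.

Lemma powb (w : R) (n : nat) : 0 < w < 1 -> 0 < w ^ n <= 1.
Proof.
  intros Hw; induction n as [|n IH]; simpl; [lra|].
  split; [nra|nra].
Qed.

Lemma qbounds (w : R) (j : nat) : 0 < w < 1 -> (2 <= j)%nat ->
  w ^ j = w * w ^ (j - 1) /\ 0 < w ^ (j - 1) < 1.
Proof.
  intros Hw Hj.
  destruct j as [|k]; [lia|].
  replace (S k - 1)%nat with k by lia.
  split; [reflexivity|].
  destruct k as [|m]; [lia|].
  simpl. pose proof (powb w m Hw). nra.
Qed.

Lemma div_ge (a b x y : R) : 0 < a -> 0 < b ->
  (x / a >= y / b <-> x * b >= y * a).
Proof.
  intros Ha Hb.
  assert (E : x / a - y / b = (x * b - y * a) / (a * b)) by (field; lra).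
  assert (Hab : 0 < a * b) by nra.
  split; intro H.
  - assert (0 <= (x * b - y * a) / (a * b)) by lra.
    assert (0 <= (x * b - y * a) / (a * b) * (a * b)) by nra.
    replace ((x * b - y * a) / (a * b) * (a * b)) with (x * b - y * a) in H1
      by (field; lra). lra.
  - assert (0 <= (x * b - y * a) / (a * b)).
    { unfold Rdiv. apply Rmult_le_pos; [lra|]. left; apply Rinv_0_lt_compat; lra. }
    lra.
Qed.

Lemma sp_iff (t c d w tau p : R) (j : nat) : 0 < d < 1 -> 0 < w < 1 -> (2 <= j)%nat ->
  (Pi_s_C t c d w tau p >= Pi_s_J t c d w tau p j <->
   w * ((1 - d) * p * t - c * tau) >= c * (t - tau)).
Proof.
  intros Hd Hw Hj.
  destruct (qbounds w j Hw Hj) as [Ej Hq].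
  unfold Pi_s_C, Pi_s_J. rewrite Ej.
  set (q := w ^ (j - 1)) in *.
  assert (HA : 0 < 1 - (1 - d) * w) by nra.
  assert (HB : 0 < 1 - (1 - d) * (w * q)).
  { assert (w * q < 1) by nra. nra. }
  rewrite (div_ge _ _ _ _ HA HB).
  set (S := w * ((1 - d) * p * t - c * tau) - c * (t - tau)).
  assert (E : ((1 - d) * (p - c) * t - d * c * tau) * (1 - (1 - d) * (w * q)) -
    ((1 - d) * (p * t - c * tau - q * c * (t - tau)) - d * c * tau) * (1 - (1 - d) * w)
    = (1 - d) * (1 - q) * S) by (unfold S; ring).
  assert (Hpos : 0 < (1 - d) * (1 - q)) by nra.
  split; intro H.
  - assert (0 <= (1 - d) * (1 - q) * S) by lra.
    assert (0 <= S) by nra. unfold S in *; lra.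
  - assert (0 <= S) by (unfold S; lra).
    assert (0 <= (1 - d) * (1 - q) * S) by nra. lra.
Qed.

Lemma cl_iff (t : R) (G : R -> R) (d w tau p : R) (j : nat) : 0 < d < 1 -> 0 < w < 1 -> (2 <= j)%nat ->
  (Pi_c_C t G d w tau p >= Pi_c_J t G d w tau p j <->
   G d * (t - (1 - w) * tau) >= p * t).
Proof.
  intros Hd Hw Hj.
  destruct (qbounds w j Hw Hj) as [Ej Hq].
  unfold Pi_c_C, Pi_c_J. rewrite Ej.
  set (q := w ^ (j - 1)) in *.
  assert (HA : 0 < 1 - (1 - d) * w) by nra.
  assert (HB : 0 < 1 - (1 - d) * (w * q)).
  { assert (w * q < 1) by nra. nra. }
  rewrite (div_ge _ _ _ _ HA HB).
  set (g := G d).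
  set (S := g * (t - (1 - w) * tau) - p * t).
  assert (E : ((1 - d) * (g - p) * t + d * g * tau) * (1 - (1 - d) * (w * q)) -
    ((1 - d) * (g * tau + q * (g * (t - tau) - p * t)) + d * g * tau) * (1 - (1 - d) * w)
    = (1 - d) * (1 - q) * S) by (unfold S; ring).
  assert (Hpos : 0 < (1 - d) * (1 - q)) by nra.
  split; intro H.
  - assert (0 <= (1 - d) * (1 - q) * S) by lra.
    assert (0 <= S) by nra. unfold S in *; lra.
  - assert (0 <= S) by (unfold S; lra).
    assert (0 <= (1 - d) * (1 - q) * S) by nra. lra.
Qed.

Lemma coop_iff (t c : R) (G : R -> R) (d w tau p : R) : 0 < d < 1 -> 0 < w < 1 ->
  (coop_conditions t c G d w tau p <->
   (w * ((1 - d) * p * t - c * tau) >= c * (t - tau) /\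
    G d * (t - (1 - w) * tau) >= p * t)).
Proof.
  intros Hd Hw. unfold coop_conditions. split.
  - intros [H1 H2]. split.
    + apply (sp_iff t c d w tau p 2); auto.
    + apply (cl_iff t G d w tau p 2); auto.
  - intros [H1 H2]. split; intros j Hj.
    + apply (sp_iff t c d w tau p j); auto.
    + apply (cl_iff t G d w tau p j); auto.
Qed.

Lemma contra (t c g D w tau p : R) : 0 < t -> 0 < c -> 0 < w < 1 -> 0 < tau < t ->
  0 < D -> w * D * g < c ->
  ~ (w * (D * p * t - c * tau) >= c * (t - tau) /\ g * (t - (1 - w) * tau) >= p * t).
Proof.
  intros Ht Hc Hw Htau HD Hg [H1 H2].
  assert (Hs : 0 < t - (1 - w) * tau) by nra.
  assert (A1 : D * w * (g * (t - (1 - w) * tau)) >= D * w * (p * t)).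
  { apply Rle_ge, Rmult_le_compat_l; nra. }
  assert (A2 : w * D * g * (t - (1 - w) * tau) < c * (t - (1 - w) * tau)) by nra.
  nra.
Qed.
Lemma corner1 (t c Gm dm p : R) : 0 < Gm -> dm < 1 -> Gm - c / (1 - dm) <> 0 ->
  let ws := c / ((1 - dm) * Gm) in
  let tau := (Gm - p) / (Gm - c / (1 - dm)) * t in
  Gm * (t - (1 - ws) * tau) = p * t /\ ws * ((1 - dm) * p * t - c * tau) = c * (t - tau).
Proof.
  intros HG Hd Hn ws tau. unfold ws, tau.
  assert (1 - dm <> 0) by lra.
  assert (Hn' : Gm * (1 - dm) - c <> 0).
  { intro E; apply Hn. replace (Gm - c / (1 - dm)) with ((Gm * (1 - dm) - c) / (1 - dm)) by (field; lra).
    rewrite E. unfold Rdiv; ring. }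
  split; field; repeat split; lra.
Qed.

Lemma corner2 (t c Gs Gm ds dm w : R) : 0 < w -> ds < 1 -> dm < 1 ->
  (1 - ds) * Gs = c / w ->
  (Gs - Gm) * (1 - ds) * (1 - dm) - c * (ds - dm) <> 0 ->
  Gm - c / (1 - dm) <> 0 ->
  let p := c * (c / w - Gm * (1 - dm)) /
    ((Gs - Gm) * (1 - ds) * (1 - dm) - c * (ds - dm)) in
  let tau := (Gm - p) / (Gm - c / (1 - dm)) * t in
  w * ((1 - ds) * p * t - c * tau) = c * (t - tau) /\ Gs * (t - (1 - w) * tau) = p * t.
Proof.
  intros Hw Hds Hdm Hc HQ Hn p tau. unfold tau, p.
  assert (1 - dm <> 0) by lra.
  assert (Hn' : Gm * (1 - dm) - c <> 0).
  { intro E; apply Hn. replace (Gm - c / (1 - dm)) with ((Gm * (1 - dm) - c) / (1 - dm)) by (field; lra).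
    rewrite E. unfold Rdiv; ring. }
  assert (Ec : c = w * (1 - ds) * Gs) by (rewrite Rmult_assoc, Hc; field; lra).
  subst c.
  split; field; repeat split; try lra.
Qed.

Theorem theorem2 (t c : R) (G : R -> R) (dmax wmin dstar : R) :
  0 < t -> 0 < c ->
  strict_decr_01 G -> continuous_on_01 G ->
  (forall x, 0 <= x <= 1 -> 0 < G x) ->
  0 < dmax < 1 -> 0 < wmin < 1 -> wmin * G 0 > c ->
  (* dstar is the unique x in (0,1) with (1-x) G(x) = c / wmin *)
  0 < dstar < 1 -> (1 - dstar) * G dstar = c / wmin ->
  let pstar :=
    c * (c / wmin - G dmax * (1 - dmax)) /
    ((G dstar - G dmax) * (1 - dstar) * (1 - dmax) - c * (dstar - dmax)) in
  let taustar := (G dmax - pstar) / (G dmax - c / (1 - dmax)) * t in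
  let wstar := c / ((1 - dmax) * G dmax) in
  (G dstar - G dmax) * (1 - dstar) * (1 - dmax) - c * (dstar - dmax) <> 0 ->
  G dmax - c / (1 - dmax) <> 0 ->
  0 < taustar < t ->
  (* (i) *)
  (forall d w, 0 < d <= dmax -> wstar <= w < 1 ->
     coop_conditions t c G d w taustar pstar) /\
  (* (ii) *)
  (forall d w, 0 < d <= dstar -> wmin <= w < 1 ->
     coop_conditions t c G d w taustar pstar) /\
  (* (iii) optimality *)
  (forall tau p w, 0 < tau < t -> 0 < p -> 0 < w < 1 -> w < wstar ->
     ~ coop_conditions t c G dmax w tau p) /\
  (forall tau p d, 0 < tau < t -> 0 < p -> dstar < d < 1 ->
     ~ coop_conditions t c G d wmin tau p).
Proof.
  intros Ht Hc Hdec _ Hpos Hdm Hwm _ Hds Hstar pstar taustar wstar HQ Hn Htau.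
  assert (HGm : 0 < G dmax) by (apply Hpos; lra).
  assert (HGs : 0 < G dstar) by (apply Hpos; lra).
  assert (Gle : forall x y, 0 <= x -> x <= y -> y <= 1 -> G y <= G x).
  { intros x y H1 H2 H3. destruct (Req_dec x y) as [->|Hne]; [lra|].
    left; apply Hdec; lra. }
  assert (Hws : 0 < wstar).
  { unfold wstar. apply Rdiv_lt_0_compat; [lra|]. nra. }
  destruct (corner1 t c (G dmax) dmax pstar HGm ltac:(lra) Hn) as [C1a C1b].
  fold wstar taustar in C1a, C1b.
  destruct (corner2 t c (G dstar) (G dmax) dstar dmax wmin ltac:(lra) ltac:(lra) ltac:(lra)
    Hstar HQ Hn) as [C2a C2b].
  fold pstar taustar in C2a, C2b.
  split; [|split; [|split]].
  - intros d w Hd Hw.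
    apply coop_iff; [lra|lra|].
    assert (Hgd : G dmax <= G d) by (apply Gle; lra).
    assert (Hk : 0 < (1 - dmax) * pstar * t - c * taustar).
    { assert (0 < c * (t - taustar)) by nra. nra. }
    assert (Hp : 0 < pstar).
    { assert (0 < (1 - dmax) * pstar * t) by nra.
      assert (0 < (1 - dmax) * t) by nra.
      destruct (Rle_or_lt pstar 0) as [Hn0|]; [|auto].
      assert (0 <= (1 - dmax) * t * (- pstar)) by (apply Rmult_le_pos; lra). nra. }
    assert (Hpt : 0 < pstar * t) by (apply Rmult_lt_0_compat; lra).
    split.
    + assert (0 <= (dmax - d) * (pstar * t)) by (apply Rmult_le_pos; lra).
      assert (E1 : (1 - dmax) * pstar * t - c * taustar <= (1 - d) * pstar * t - c * taustar) by nra.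
      assert (wstar * ((1 - dmax) * pstar * t - c * taustar) <= w * ((1 - d) * pstar * t - c * taustar)).
      { apply Rmult_le_compat; lra. }
      lra.
    + assert (0 < t - (1 - wstar) * taustar) by nra.
      assert (0 <= (w - wstar) * taustar) by (apply Rmult_le_pos; lra).
      assert (t - (1 - wstar) * taustar <= t - (1 - w) * taustar) by nra.
      assert (G dmax * (t - (1 - wstar) * taustar) <= G d * (t - (1 - w) * taustar)).
      { apply Rmult_le_compat; lra. }
      lra.
  - intros d w Hd Hw.
    apply coop_iff; [lra|lra|].
    assert (Hgd : G dstar <= G d) by (apply Gle; lra).
    assert (Hk : 0 < (1 - dstar) * pstar * t - c * taustar).
    { assert (0 < c * (t - taustar)) by nra. nra. }
    assert (Hp : 0 < pstar).
    { assert (0 < (1 - dstar) * pstar * t) by nra.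
      assert (0 < (1 - dstar) * t) by nra.
      destruct (Rle_or_lt pstar 0) as [Hn0|]; [|auto].
      assert (0 <= (1 - dstar) * t * (- pstar)) by (apply Rmult_le_pos; lra). nra. }
    assert (Hpt : 0 < pstar * t) by (apply Rmult_lt_0_compat; lra).
    split.
    + assert (0 <= (dstar - d) * (pstar * t)) by (apply Rmult_le_pos; lra).
      assert (E1 : (1 - dstar) * pstar * t - c * taustar <= (1 - d) * pstar * t - c * taustar) by nra.
      assert (wmin * ((1 - dstar) * pstar * t - c * taustar) <= w * ((1 - d) * pstar * t - c * taustar)).
      { apply Rmult_le_compat; lra. }
      lra.
    + assert (0 < t - (1 - wmin) * taustar) by nra.
      assert (0 <= (w - wmin) * taustar) by (apply Rmult_le_pos; lra).
      assert (t - (1 - wmin) * taustar <= t - (1 - w) * taustar) by nra.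
      assert (G dstar * (t - (1 - wmin) * taustar) <= G d * (t - (1 - w) * taustar)).
      { apply Rmult_le_compat; lra. }
      lra.
  - intros tau p w Htu Hp Hw Hlt H.
    apply coop_iff in H; [|lra|lra].
    apply (contra t c (G dmax) (1 - dmax) w tau p); auto; try lra.
    assert (w * ((1 - dmax) * G dmax) < wstar * ((1 - dmax) * G dmax)).
    { apply Rmult_lt_compat_r; nra. }
    unfold wstar in H0. field_simplify in H0; [|nra]. nra.
  - intros tau p d Htu Hp Hd H.
    apply coop_iff in H; [|lra|lra].
    apply (contra t c (G d) (1 - d) wmin tau p); auto; try lra.
    assert (HGd : G d < G dstar) by (apply Hdec; lra).
    assert (0 < G d) by (apply Hpos; lra).
    assert ((1 - d) * G d < (1 - dstar) * G dstar) by nra.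
    rewrite Hstar in H1.
    assert (wmin * ((1 - d) * G d) < wmin * (c / wmin)) by (apply Rmult_lt_compat_l; lra).
    replace (wmin * (c / wmin)) with c in H2 by (field; lra). nra.
Qed.
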